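(* Let $G$ be the digraph with $V(G)=\{u,v,w\}$ and $E(G)=\{(u,v),(u,w),(w,w)\}$. Then the associative spectrum of $\mathbb{A}(G)$ satisfies $s_n=|R_{n-1}|$ for all $n\ge3$. Hence $s_n=\Theta(\alpha^n)$, where $\alpha\approx1.755$ is the unique positive root of $x^4-x^3-x^2-1$.
   Context: The graph algebra $\mathbb{A}(G)$ is the groupoid on $V\cup\{\infty\}$ with $xy=x$ if $x,y\in V$ and $(x,y)\in E$, and $xy=\infty$ otherwise. $B_n$ is the set of binary terms in which $x_1,\dots,x_n$ each occur once in this order; the associative spectrum $s_n$ is the number of distinct term operations on $\mathbb{A}(G)$ induced by bracketings in $B_n$. For $n\ge2$, $R_n$ is the set of words of length $n$ over $\{0,1\}$ that do not start with $01$, do not end with $10$, and do not contain $101$. $\Theta(\alpha^n)$ means bounded between $c_1\alpha^n$ and $c_2\alpha^n$ for positive constants $c_1,c_2$. *)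

(* Defs.v *)
From HB Require Import structures.
From mathcomp Require Import all_boot all_order all_algebra.
From mathcomp Require Import reals.
Set Implicit Arguments. Unset Strict Implicit. Unset Printing Implicit Defensive.
Import Order.TTheory GRing.Theory Num.Theory.

(* A(G) for a digraph G = (V, E), E given as a relation on the finType V.
   Carrier V ∪ {∞} is [option V], with [None] playing the role of ∞. *)
Definition galg (V : finType) := option V.

Definition gmul (V : finType) (E : rel V) (x y : galg V) : galg V :=
  match x, y with
  | Some a, Some b => if E a b then Some a else None
  | _, _ => None
  end.

(* A bracketing of x_1,...,x_n (each once, in order) is a binary tree with
   n leaves; the i-th leaf from the left is x_i. *)
Inductive btree : Type := Leaf | Node of btree & btree.

Fixpoint leaves (t : btree) : nat :=
  match t with Leaf => 1 | Node l r => leaves l + leaves r end.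

(* All binary trees with exactly n leaves (fuel = n suffices). *)
Fixpoint trees_fuel (fuel n : nat) : seq btree :=
  match fuel with
  | 0 => [::]
  | fuel'.+1 =>
      if n == 1 then [:: Leaf]
      else flatten [seq [seq Node l r | l <- trees_fuel fuel' k,
                                        r <- trees_fuel fuel' (n - k)]
                   | k <- iota 1 n.-1]
  end.

Definition B (n : nat) : seq btree := trees_fuel n n.

Fixpoint teval (V : finType) (E : rel V) (t : btree) (s : seq (galg V))
  : galg V :=
  match t with
  | Leaf => head None s
  | Node l r => gmul E (teval E l (take (leaves l) s))
                       (teval E r (drop (leaves l) s))
  end.

Definition termop (V : finType) (E : rel V) (n : nat) (t : btree)
  : {ffun n.-tuple (galg V) -> galg V} :=
  [ffun x : n.-tuple (galg V) => teval E t x].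

Definition spectrum (V : finType) (E : rel V) (n : nat) : nat :=
  size (undup [seq termop E n t | t <- B n]).

(* V = {u, v, w} encoded as 'I_3 with u = 0, v = 1, w = 2;
   E = {(u,v), (u,w), (w,w)}. *)
Definition Gedge : rel 'I_3 := fun a b =>
  [|| (nat_of_ord a == 0) && (nat_of_ord b == 1),
      (nat_of_ord a == 0) && (nat_of_ord b == 2)
    | (nat_of_ord a == 2) && (nat_of_ord b == 2)].

(* 0 = false, 1 = true. *)
Definition Rword (s : seq bool) : bool :=
  [&& ~~ prefix [:: false; true] s,
      ~~ suffix [:: true; false] s
    & ~~ infix [:: true; false; true] s].

Definition Rset (n : nat) : {set n.-tuple bool} :=
  [set w : n.-tuple bool | Rword w].

(* Main.v *)
Require Import Defs.
From HB Require Import structures.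
From mathcomp Require Import all_boot all_order all_algebra.
From mathcomp Require Import reals.
From mathcomp Require Import zify ring lra.
Import Order.TTheory GRing.Theory Num.Theory.
Set Implicit Arguments. Unset Strict Implicit. Unset Printing Implicit Defensive.

Fixpoint lw (t : btree) : seq bool :=
  match t with
  | Leaf => [::]
  | Node l r => lw l ++ (if r is Leaf then [:: true] else nseq (leaves r) false)
  end.

Lemma leaves_gt0 t : 0 < leaves t.
Proof. elim: t => //= l IHl r IHr; lia. Qed.

Lemma size_lw t : size (lw t) = (leaves t).-1.
Proof.
elim: t => //= l IHl r IHr; rewrite size_cat IHl.
have := leaves_gt0 l; have := leaves_gt0 r.
case: r IHr => [|r1 r2] /= IHr; rewrite ?size_nseq; lia.
Qed.

Definition isw (x : galg 'I_3) := if x is Some a then nat_of_ord a == 2 else false.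
Definition isv (x : galg 'I_3) := if x is Some a then nat_of_ord a == 1 else false.

Fixpoint okU (bs : seq bool) (xs : seq (galg 'I_3)) : bool :=
  match bs, xs with
  | b :: bs', x :: xs' => (isw x || b && isv x) && okU bs' xs'
  | _, _ => true
  end.

Definition form (bs : seq bool) (xs : seq (galg 'I_3)) : galg 'I_3 :=
  match xs with
  | Some a :: rest =>
      if nat_of_ord a == 0 then (if okU bs rest then Some a else None)
      else if nat_of_ord a == 1 then (if rest is [::] then Some a else None)
      else (if all isw rest then Some a else None)
  | _ => None
  end.

Lemma okU_cat bs1 bs2 xs1 xs2 : size bs1 = size xs1 ->
  okU (bs1 ++ bs2) (xs1 ++ xs2) = okU bs1 xs1 && okU bs2 xs2.
Proof.
elim: bs1 xs1 => [|b bs IH] [|x xs] //= [e]; by rewrite IH // andbA.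
Qed.

Lemma okU_nseq k xs : size xs = k -> okU (nseq k false) xs = all isw xs.
Proof.
elim: xs k => [|x xs IH] [|k] //= [e]; by rewrite IH // orbF.
Qed.

Lemma teval_form t s : size s = leaves t -> teval Gedge t s = form (lw t) s.
Proof.
elim: t s => [|l IHl r IHr] s /=.
  case: s => [|x [|]] //= _; case: x => [a|] //=.
  by case: ifP => // _; case: ifP.
move=> hs.
have hl : size (take (leaves l) s) = leaves l by rewrite size_takel // hs leq_addr.
have hr : size (drop (leaves l) s) = leaves r by rewrite size_drop; lia.
rewrite IHl // IHr //.
rewrite -{3}(cat_take_drop (leaves l) s).
move: hl hr; set s1 := take _ s; set s2 := drop _ s => hl hr.
case: s1 hl => [|x rest1] hl; first by have := leaves_gt0 l; rewrite -hl.
case: s2 hr => [|y rest2] hr; first by have := leaves_gt0 r; rewrite -hr.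
have srest : size (lw l) = size rest1 by rewrite size_lw -hl.
clear hl hs; case: x => [a|] //=.
case: a => [[|[|[|k]]] Ha] //=.
- rewrite okU_cat //; case: (okU (lw l) rest1) => //=.
  case: r IHr hr => [|r1 r2] IHr hr /=.
    case: rest2 hr => [|? ?] //= _.
    case: y => [b|] //=; case: b => [[|[|[|k]]] Hb] //=.
  rewrite okU_nseq //; move: hr => /= [hr].
  case: y => [b|] //=; case: b => [[|[|[|k]]] Hb] //=.
  + by case: ifP.
  + case: rest2 hr => [|? ?] //= hr; have := leaves_gt0 r1; have := leaves_gt0 r2; lia.
  + by case: ifP.
- by case: rest1 {srest} => [|? ?] //=; case: y {hr} => [b|] //=; (do !case: ifP => //); case: rest2.
- rewrite all_cat; case: (all isw rest1) => //=.
  case: y {hr} => [b|] //=; case: b => [[|[|[|k]]] Hb] //=.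
  - by case: (okU _ _).
  - by case: rest2.
  - by case: (all isw rest2).
Qed.

Definition Phi n (bs : seq bool) : {ffun n.-tuple (galg 'I_3) -> galg 'I_3} :=
  [ffun x : n.-tuple (galg 'I_3) => form bs x].

Lemma termopE n t : leaves t = n -> termop Gedge n t = Phi n (lw t).
Proof. by move=> e; apply/ffunP => x; rewrite !ffunE teval_form // size_tuple. Qed.

Definition gu : galg 'I_3 := Some (@Ordinal 3 0 isT).
Definition code (b : bool) : galg 'I_3 :=
  if b then Some (@Ordinal 3 1 isT) else Some (@Ordinal 3 2 isT).

Lemma okU_refl bs : okU bs (map code bs).
Proof. by elim: bs => [|[] bs IH] //=. Qed.

Lemma okU_code bs1 bs2 : size bs1 = size bs2 ->
  okU bs2 (map code bs1) -> okU bs1 (map code bs2) -> bs1 = bs2.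
Proof.
elim: bs1 bs2 => [|b1 bs1 IH] [|b2 bs2] //= [e].
by case: b1; case: b2 => //= /IH h1 /h1 ->.
Qed.

Lemma Phi_inj n bs1 bs2 : size bs1 = n.-1 -> size bs2 = n.-1 -> 0 < n ->
  Phi n bs1 = Phi n bs2 -> bs1 = bs2.
Proof.
move=> s1 s2 n0 E.
have h1 : size (gu :: map code bs1) == n by rewrite /= size_map s1 prednK.
have h2 : size (gu :: map code bs2) == n by rewrite /= size_map s2 prednK.
have : Phi n bs1 (Tuple h1) = Phi n bs2 (Tuple h1) by rewrite E.
rewrite !ffunE /= okU_refl.
case: ifP => // o1 _.
have : Phi n bs1 (Tuple h2) = Phi n bs2 (Tuple h2) by rewrite E.
rewrite !ffunE /= okU_refl.
case: ifP => // o2 _.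
by apply: okU_code => //; rewrite s1 s2.
Qed.

Fixpoint eqbt (t1 t2 : btree) : bool :=
  match t1, t2 with
  | Leaf, Leaf => true
  | Node a b, Node c d => eqbt a c && eqbt b d
  | _, _ => false
  end.

Lemma eqbtP : Equality.axiom eqbt.
Proof.
elim=> [|a IHa b IHb] [|c d] /=; try by constructor.
apply: (iffP andP) => [[/IHa -> /IHb ->] //|[<- <-]].
by split; [apply/IHa|apply/IHb].
Qed.

HB.instance Definition _ := hasDecEq.Build btree eqbtP.

Lemma mem_trees fuel n t : n <= fuel -> (t \in trees_fuel fuel n) = (leaves t == n).
Proof.
elim: fuel n t => [|f IH] n t hn /=.
  by move: hn; rewrite leqn0 => /eqP ->; have := leaves_gt0 t; case: (leaves t).
case: eqP => [->|n1].
  rewrite inE; case: t => [|l r] //=.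
  have := leaves_gt0 l; have := leaves_gt0 r; move=> h1 h2.
  have -> : (Node l r == Leaf) = false by [].
  by symmetry; apply/negbTE; apply/eqP; lia.
apply/idP/idP.
  case/flattenP => x /mapP [k hk ->] /allpairsP [[l r] /= [hl hr ->]] /=.
  move: hk; rewrite mem_iota => hk.
  rewrite IH in hl; last by lia.
  rewrite IH in hr; last by lia.
  move: hl hr => /eqP hl /eqP hr; apply/eqP; lia.
case: t => [|l r] /=; first by move/eqP => e; case: n1.
move/eqP => e.
have hl := leaves_gt0 l; have hr := leaves_gt0 r.
apply/flattenP; exists [seq Node l0 r0 | l0 <- trees_fuel f (leaves l),
                                      r0 <- trees_fuel f (n - leaves l)].
  apply/mapP; exists (leaves l) => //; rewrite mem_iota; lia.
apply/allpairsP; exists (l, r) => /=; split => //.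
  rewrite IH //; lia.
rewrite IH; [apply/eqP; lia|lia].
Qed.

Lemma mem_B n t : (t \in B n) = (leaves t == n).
Proof. exact: mem_trees. Qed.

Definition step (st : nat) (b : bool) : nat :=
  match st, b with
  | 0, true => 0 | 0, false => 1
  | 1, true => 3 | 1, false => 2
  | 2, true => 0 | 2, false => 2
  | _, _ => 3
  end.
Definition run st (s : seq bool) := foldl step st s.
Definition good st s := (run st s == 0) || (run st s == 2).

Lemma suffix_cons2 (T : eqType) (s1 s2 : seq T) x :
  suffix s1 (x :: s2) = (s1 == x :: s2) || suffix s1 s2.
Proof.
rewrite !suffixE /=; case: (leqP (size s1) (size s2)) => h.
  rewrite subSn //=.
  have -> : (s1 == x :: s2) = false.
    by apply/negbTE; apply: contraTneq h => ->; rewrite /= ltnn.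
  by [].
have -> : (size s2).+1 - size s1 = 0 by lia.
have -> : size s2 - size s1 = 0 by lia.
rewrite !drop0 eq_sym.
have -> : (s2 == s1) = false.
  by apply/negbTE; apply: contraTneq h => ->; rewrite ltnn.
by rewrite orbF.
Qed.

Lemma run3 s : run 3 s = 3.
Proof. by elim: s => [|[] s IH]. Qed.

Notation p01 := [:: false; true].
Notation i101 := [:: true; false; true].
Notation s10 := [:: true; false].

Lemma goodAB n s : size s <= n ->
  good 0 s = [&& ~~ prefix p01 s, s != [:: false], ~~ infix i101 s & ~~ suffix s10 s]
  /\ good 2 s = ~~ infix i101 s && ~~ suffix s10 s.
Proof.
elim: n s => [|n IH] [|b s] //= hs.
have [IHA IHB] := IH s hs.
case: b.
  rewrite /good /= -/(good 0 s) suffix_cons2 IHA eqseq_cons /= [[:: false] == s]eq_sym.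
  by split; case: (prefix _ _); case: (infix _ _); case: (s == _); case: (suffix _ _).
rewrite /good /= -/(good 1 s) -/(good 2 s) suffix_cons2 IHB /=.
split => //.
case: s hs {IHA IHB} => [|[] s] hs //=.
  by rewrite prefix0s /good /= run3.
rewrite /good /= -/(good 2 s) suffix_cons2 eqseq_cons /=.
by have [_ ->] := IH s (ltnW hs).
Qed.

Lemma Rword_good s : s != [:: false] -> Rword s = good 0 s.
Proof.
move=> h; have [-> _] := goodAB (leqnn (size s)); rewrite h /Rword.
by case: (prefix _ _); case: (infix _ _); case: (suffix _ _).
Qed.

Lemma run_cat st a b : run st (a ++ b) = run (run st a) b.
Proof. exact: foldl_cat. Qed.

Lemma run2_nseq k : run 2 (nseq k false) = 2.
Proof. by elim: k. Qed.

Lemma good_lw t : good 0 (lw t).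
Proof.
rewrite /good; elim: t => [|l IHl r IHr] //=.
rewrite run_cat; move: IHl; set st := run 0 (lw l).
case: r {IHr} => [|r1 r2] /=.
  by case/orP => /eqP ->.
have [k ->] : exists k, leaves r1 + leaves r2 = k.+2.
  exists (leaves r1 + leaves r2 - 2); have := leaves_gt0 r1; have := leaves_gt0 r2; lia.
by case/orP => /eqP -> /=; rewrite run2_nseq.
Qed.

Definition ext t := if t is Node l r then Node l (Node r Leaf) else Leaf.

Fixpoint build (acc : btree) (inz : bool) (s : seq bool) : btree :=
  match s with
  | [::] => acc
  | true :: s' => build (Node acc Leaf) false s'
  | false :: s' =>
      if inz then build (ext acc) true s'
      else match s' with
           | false :: s'' => build (Node acc (Node Leaf Leaf)) true s''
           | _ => acc
           end
  end.

Lemma lw_build n s acc inz : size s <= n ->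
  good (if inz then 2 else 0) s ->
  (inz -> exists l r1 r2, acc = Node l (Node r1 r2)) ->
  lw (build acc inz s) = lw acc ++ s.
Proof.
elim: n s acc inz => [|n IH] [|b s] acc inz //= hs; try by rewrite cats0.
case: b.
  move=> g _; rewrite (IH s) //=; first by rewrite -catA.
  by case: inz g.
case: inz.
  move=> g /(_ isT) [l [r1 [r2 ->]]].
  rewrite (IH s) //=; last by exists l, (Node r1 r2), Leaf.
  by rewrite -!catA /= nseqD -catA.
case: s hs => [|[] s] hs //=.
  by rewrite /good /= run3.
move=> g _; rewrite (IH s) //=; last by exists acc, Leaf, Leaf.
  by rewrite -catA.
by apply: ltnW.
Qed.

Lemma build_spec s : good 0 s ->
  lw (build Leaf false s) = s /\ leaves (build Leaf false s) = (size s).+1.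
Proof.
move=> g; have e : lw (build Leaf false s) = s by rewrite (@lw_build (size s)).
split=> //; have := size_lw (build Leaf false s); rewrite e.
have := leaves_gt0 (build Leaf false s); lia.
Qed.

Lemma undup_map_in (T1 T2 : eqType) (f : T1 -> T2) (s : seq T1) :
  {in s &, injective f} -> undup (map f s) = map f (undup s).
Proof.
elim: s => //= x s IH inj.
have inj' : {in s &, injective f}.
  by move=> a b ha hb; apply: inj; rewrite inE ?ha ?hb orbT.
have -> : (f x \in map f s) = (x \in s).
  apply/mapP/idP => [[y hy e]|h]; last by exists x.
  by rewrite (inj x y) // ?inE ?eqxx ?hy ?orbT.
by case: (x \in s) => /=; rewrite IH.
Qed.

Lemma mem_lwB n x : 3 <= n ->
  (x \in map lw (B n)) = (size x == n.-1) && Rword x.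
Proof.
move=> n3; apply/mapP/idP.
  move=> [t]; rewrite mem_B => /eqP ht ->.
  rewrite size_lw ht eqxx /= Rword_good ?good_lw //.
  by apply/eqP => e; have := size_lw t; rewrite e ht /=; lia.
case/andP => /eqP sx rx.
have nf : x != [:: false] by apply/eqP => e; move: sx; rewrite e /=; lia.
rewrite Rword_good // in rx.
have [e1 e2] := build_spec rx.
exists (build Leaf false x) => //.
by rewrite mem_B e2 sx; apply/eqP; lia.
Qed.

Lemma card_tuples m (P : pred (seq bool)) (s : seq (seq bool)) :
  uniq s -> (forall x, (x \in s) = (size x == m) && P x) ->
  #|[set w : m.-tuple bool | P w]| = size s.
Proof.
move=> us ms.
rewrite cardE -(size_map val).
apply: perm_size; apply: uniq_perm => //.
- by rewrite (map_inj_uniq val_inj) enum_uniq.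
move=> x; rewrite ms.
apply/mapP/idP => [[w]|/andP [/eqP sx px]].
  by rewrite mem_enum inE => pw ->; rewrite pw size_tuple eqxx.
have h : size x == m by rewrite sx.
by exists (Tuple h) => //; rewrite mem_enum inE.
Qed.

Lemma spectrum_eq n : 3 <= n -> spectrum Gedge n = #|Rset n.-1|.
Proof.
move=> n3; rewrite /spectrum.
have -> : [seq termop Gedge n t | t <- B n] = map (Phi n) (map lw (B n)).
  rewrite -map_comp; apply/eq_in_map => t; rewrite mem_B => /eqP ht.
  by rewrite /= termopE.
rewrite undup_map_in ?size_map; last first.
  move=> a b; rewrite !mem_lwB // => /andP [/eqP sa _] /andP [/eqP sb _].
  by apply: Phi_inj => //; lia.
rewrite /Rset (@card_tuples _ _ (undup (map lw (B n)))) ?undup_uniq //.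
by move=> x; rewrite mem_undup mem_lwB.
Qed.

Fixpoint allw (m : nat) : seq (seq bool) :=
  if m is m'.+1 then map (cons true) (allw m') ++ map (cons false) (allw m')
  else [:: [::]].

Lemma cons_inj (b : bool) : injective (cons b).
Proof. by move=> x y []. Qed.

Lemma allw_uniq m : uniq (allw m).
Proof.
elim: m => //= m IH; rewrite cat_uniq !(map_inj_uniq (@cons_inj _)) IH /= andbT.
by apply/hasPn => x /mapP [y _ ->]; apply/mapP => [[z _]].
Qed.

Lemma mem_allw m x : (x \in allw m) = (size x == m).
Proof.
elim: m x => [|m IH] [|b x] //=.
  by rewrite mem_cat; apply/negbTE/norP; split; apply/mapP => [[z _]].
rewrite mem_cat eqSS -IH; case: b.
  rewrite (mem_map (@cons_inj _)); case: (x \in allw m) => //=.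
  by apply: negbTE; apply/mapP => [[z _]].
rewrite (mem_map (@cons_inj _)) orbC; case: (x \in allw m) => //=.
by apply: negbTE; apply/mapP => [[z _]].
Qed.

Definition cntg st m := count (good st) (allw m).

Lemma cntgS st m :
  cntg st m.+1 = cntg (step st true) m + cntg (step st false) m.
Proof. by rewrite /cntg /= count_cat !count_map. Qed.

Lemma cntg3 m : cntg 3 m = 0.
Proof.
rewrite /cntg; transitivity (count pred0 (allw m)); last exact: count_pred0.
by apply: eq_count => x; rewrite /good run3.
Qed.

Lemma card_R m : 2 <= m -> #|Rset m| = cntg 0 m.
Proof.
move=> m2; rewrite /Rset (@card_tuples _ _ (filter Rword (allw m))).
- rewrite size_filter /cntg; apply: eq_in_count => x; rewrite mem_allw => /eqP sx.
  by rewrite Rword_good //; apply/eqP => e; move: sx; rewrite e /=; lia.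
- by rewrite filter_uniq ?allw_uniq.
by move=> x; rewrite mem_filter mem_allw andbC.
Qed.

Lemma cnt_rec m : cntg 0 (m + 4) = cntg 0 (m + 3) + cntg 0 (m + 2) + cntg 0 m.
Proof.
have X k : cntg 0 k.+1 = cntg 0 k + cntg 1 k by rewrite cntgS.
have Y k : cntg 1 k.+1 = cntg 2 k by rewrite cntgS cntg3.
have Z k : cntg 2 k.+1 = cntg 0 k + cntg 2 k by rewrite cntgS.
rewrite !addnS !addn0.
have := X m.+3; have := X m.+2; have := X m.+1; have := X m.
have := Y m.+2; have := Y m.+1; have := Y m; have := Z m.+1; have := Z m.
lia.
Qed.

Local Open Scope ring_scope.

Lemma cubic_root (R : realType) : exists2 a : R,
  a ^+ 3 - 2 * a ^+ 2 + a - 1 = 0 & 175 / 100 < a < 176 / 100.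
Proof.
pose p : {poly R} := 'X^3 - 2%:P * 'X^2 + 'X - 1.
have pE x : p.[x] = x ^+ 3 - 2 * x ^+ 2 + x - 1 by rewrite /p !hornerE.
have lab : (175/100 : R) <= 176/100 by lra.
have sab : p.[175/100] <= 0 <= p.[176/100].
  rewrite !pE; apply/andP; split; lra.
have [a /andP[h1 h2] ra] := @poly_ivt R p (175/100) (176/100) lab sab.
move: ra; rewrite /root pE => /eqP ra; exists a => //.
apply/andP; split; rewrite lt_neqAle ?h1 ?h2 andbT; apply/eqP => e.
  rewrite -e in ra; lra.
rewrite e in ra; lra.
Qed.

Lemma cubic_uniq (R : realType) (a y : R) : 0 < a -> 0 < y ->
  a ^+ 3 - 2 * a ^+ 2 + a - 1 = 0 -> y ^+ 3 - 2 * y ^+ 2 + y - 1 = 0 -> y = a.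
Proof.
move=> a0 y0 ha hy.
have g1 (x : R) : 0 < x -> x ^+ 3 - 2 * x ^+ 2 + x - 1 = 0 -> 1 < x.
  move=> x0 hx; rewrite ltNge; apply/negP => x1.
  have : x * (x - 1) ^+ 2 < 1.
    have h : (x - 1) ^+ 2 < 1 by nra.
    nra.
  have e : x * (x - 1) ^+ 2 - 1 = x ^+ 3 - 2 * x ^+ 2 + x - 1 by ring.
  rewrite hx in e; move/eqP: e; rewrite subr_eq0 => /eqP ->.
  by rewrite ltxx.
have a1 := g1 a a0 ha; have y1 := g1 y y0 hy.
have : (y - a) * ((y - 1) ^+ 2 + (a - 1) ^+ 2 + y * a - 1) = 0.
  have e : (y - a) * ((y - 1) ^+ 2 + (a - 1) ^+ 2 + y * a - 1) =
    (y ^+ 3 - 2 * y ^+ 2 + y - 1) - (a ^+ 3 - 2 * a ^+ 2 + a - 1) by ring.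
  by rewrite e hy ha subr0.
move/eqP; rewrite mulf_eq0 => /orP[/eqP|/eqP] h; first by apply/eqP; rewrite -subr_eq0 h.
exfalso; nra.
Qed.

Lemma cnt_bounds (R : realType) (a : R) : 1 <= a <= 2 ->
  a ^+ 4 = a ^+ 3 + a ^+ 2 + 1 ->
  forall m, a ^+ m / 8 <= (cntg 0 m)%:R <= 4 * a ^+ m.
Proof.
move=> /andP [a1 a2] h4 m; elim/ltn_ind: m => m IH.
case: m IH => [|[|[|[|k]]]] IH.
- have -> : cntg 0 0 = 1%N by [].
  rewrite expr0; apply/andP; split; lra.
- have -> : cntg 0 1 = 1%N by [].
  rewrite expr1; apply/andP; split; lra.
- have -> : cntg 0 2 = 2%N by [].
  have h : a ^+ 2 <= 4 by nra.
  have h' : 1 <= a ^+ 2 by nra.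
  apply/andP; split; lra.
- have -> : cntg 0 3 = 4%N by [].
  have h : a ^+ 3 <= 8 by rewrite exprS; nra.
  have h' : 1 <= a ^+ 3 by rewrite exprS; nra.
  apply/andP; split; lra.
have := cnt_rec k; rewrite !addn4 !addn3 !addn2 => ->.
rewrite !natrD.
have /andP [l3 u3] := IH k.+3 ltac:(lia).
have /andP [l2 u2] := IH k.+2 ltac:(lia).
have /andP [l0 u0] := IH k ltac:(lia).
have e : a ^+ k.+4 = a ^+ k.+3 + a ^+ k.+2 + a ^+ k.
  have -> : (k.+4 = k + 4)%N by rewrite addn4.
  have -> : (k.+3 = k + 3)%N by rewrite addn3.
  have -> : (k.+2 = k + 2)%N by rewrite addn2.
  by rewrite !exprD h4; ring.
rewrite e; apply/andP; split; lra.
Qed.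

Theorem proposition8p3 (R : realType) :
  (forall n : nat, (3 <= n)%N -> spectrum Gedge n = #|Rset n.-1|)
  /\
  exists alpha : R,
    [/\ 0 < alpha,
        alpha ^+ 4 - alpha ^+ 3 - alpha ^+ 2 - 1 = 0,
        (forall y : R, 0 < y -> y ^+ 4 - y ^+ 3 - y ^+ 2 - 1 = 0 -> y = alpha),
        175 / 100 < alpha < 176 / 100
      & exists c1 c2 : R, [/\ 0 < c1, 0 < c2 &
          exists N : nat, forall n : nat, (N <= n)%N ->
            c1 * alpha ^+ n <= (spectrum Gedge n)%:R <= c2 * alpha ^+ n]].
Proof.
split; first exact: spectrum_eq.
have [a ha /andP [l u]] := cubic_root R.
have a0 : 0 < a by lra.
have fac (x : R) : x ^+ 4 - x ^+ 3 - x ^+ 2 - 1 = (x + 1) * (x ^+ 3 - 2 * x ^+ 2 + x - 1).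
  by ring.
have q4 : a ^+ 4 - a ^+ 3 - a ^+ 2 - 1 = 0 by rewrite fac ha mulr0.
have h4 : a ^+ 4 = a ^+ 3 + a ^+ 2 + 1 by lra.
exists a; split => //.
- move=> y y0 hy; apply: (cubic_uniq a0 y0 ha).
  move: hy; rewrite fac => /eqP; rewrite mulf_eq0 => /orP [/eqP h|/eqP //].
  exfalso; lra.
- by rewrite l u.
exists (1 / 16), 4; split; try lra.
exists 3%N => n n3.
rewrite spectrum_eq // card_R; last by lia.
have a12 : 1 <= a <= 2 by apply/andP; split; lra.
have /andP [lo hi] := cnt_bounds a12 h4 n.-1.
have P0 : 0 <= a ^+ n.-1 by apply: exprn_ge0; lra.
have en : a ^+ n = a * a ^+ n.-1 by rewrite -exprS prednK //; lia.
rewrite en; apply/andP; split; nra.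
Qed.
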